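(* Let $L$ be a geometric lattice of rank $r+1$ with atoms linearly ordered. If $(b_1,\dots,b_i,b_{i+1},\dots,b_{r+1})$ is the minimal labeling of a facet of $\Delta(L)$ and $b_i<b_{i+1}$, then $(b_1,\dots,b_{i+1},b_i,\dots,b_{r+1})$ (the sequence with $b_i$ and $b_{i+1}$ interchanged) is also the minimal labeling of a facet of $\Delta(L)$.
   Context: A geometric lattice is a finite graded atomic lattice whose rank function $\rho$ satisfies $\rho(x\vee y)+\rho(x\wedge y)\le \rho(x)+\rho(y)$. Facets of the order complex $\Delta(L)$ correspond to maximal chains $\hat 0=x_0<x_1<\dots<x_{r+1}=\hat 1$ of $L$. Fix a linear order on the atoms. For a cover $x\lessdot y$, let $\lambda(x,y)$ be the least atom $a$ with $x\vee a=y$; the minimal labeling of the facet is $(\lambda(x_0,x_1),\dots,\lambda(x_r,x_{r+1}))$. A sequence of atoms is ''the minimal labeling of a facet'' if it equals the minimal labeling of some maximal chain. *)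

(* Defs.v *)
From mathcomp Require Import all_boot all_order.
Set Implicit Arguments. Unset Strict Implicit. Unset Printing Implicit Defensive.
Import Order.Theory.
Local Open Scope order_scope.

Section GeomLattice.
Variables (d : Order.disp_t) (L : finTBLatticeType d).

Definition covers (x y : L) : bool :=
  (x < y) && [forall z : L, ~~ ((x < z) && (z < y))].

Definition atom (a : L) : bool := covers \bot a.

(* rho is a rank function: rho \bot = 0 and rho increases by one along covers
   (existence of such a function = L is graded, and then rho is its rank). *)
Definition rank_function (rho : L -> nat) : Prop :=
  rho \bot = 0%N /\ forall x y : L, covers x y -> rho y = (rho x).+1.

Definition atomic : Prop :=
  forall x : L, x = \join_(a | atom a && (a <= x)) a.

Definition geometric (rho : L -> nat) : Prop :=
  [/\ rank_function rho, atomic &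
      forall x y : L, (rho (x `|` y) + rho (x `&` y) <= rho x + rho y)%N].

(* maximal chain \bot = x_0 < x_1 < ... < x_k = \top, represented by
   c = [:: x_1; ...; x_k] *)
Definition max_chain (c : seq L) : bool :=
  path covers \bot c && (last \bot c == \top).

(* linear order on atoms given by an injective weight w: a < b iff w a < w b.
   a is the minimal label of the cover x <. y *)
Definition min_label (w : L -> nat) (x y a : L) : Prop :=
  [/\ atom a, x `|` a = y &
      forall b : L, atom b -> x `|` b = y -> (w a <= w b)%N].

(* b is the minimal labeling of (the facet given by) the maximal chain c *)
Definition labeling_of (w : L -> nat) (c b : seq L) : Prop :=
  size b = size c /\
  forall j, (j < size c)%N ->
    min_label w (nth \bot (\bot :: c) j) (nth \bot c j) (nth \bot b j).

Definition is_min_labeling (w : L -> nat) (b : seq L) : Prop :=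
  exists c : seq L, max_chain c /\ labeling_of w c b.

End GeomLattice.

Definition swap_adj (T : Type) (i : nat) (s : seq T) : seq T :=
  match drop i s with
  | x :: y :: t => take i s ++ y :: x :: t
  | _ => s
  end.

(* Main.v *)
Require Import Defs.
From mathcomp Require Import all_boot all_order zify.
Import Order.Theory.
Local Open Scope order_scope.

Local Set Implicit Arguments.
Section H.
Variables (d : Order.disp_t) (L : finTBLatticeType d).
Implicit Types x y z u a : L.

Lemma covers_join x u a : covers x u -> a <= u -> ~~ (a <= x) -> x `|` a = u.
Proof.
case/andP => xu /forallP H au nax.
have xxa : x < x `|` a.
  rewrite lt_neqAle leUl andbT; apply/negP => /eqP E; move: nax.
  by rewrite E leUr.
have : x `|` a <= u by rewrite leUx (ltW xu) au.
rewrite le_eqVlt => /orP [/eqP // | lt].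
by have := H (x `|` a); rewrite xxa lt.
Qed.

Lemma exists_cover x y : x < y -> exists z, covers x z && (z <= y).
Proof.
move=> xy.
pose P := fun z : L => (x < z) && (z <= y).
have Py : P y by rewrite /P xy lexx.
case: (@arg_minnP L y P (fun z => #|[set t : L | t < z]|) Py) => z Pz Hmin.
exists z; case/andP: Pz => xz zy; rewrite zy andbT /covers xz /=.
apply/forallP => t; apply/negP => /andP [xt tz].
have Pt : P t by rewrite /P xt (le_trans (ltW tz) zy).
have := Hmin t Pt; apply/negP; rewrite -ltnNge.
apply: proper_card; apply/properP; split.
  by apply/subsetP => s; rewrite !inE => st; apply: lt_trans st tz.
by exists t; rewrite !inE ?ltxx.
Qed.

Variable rho : L -> nat.
Hypothesis rS : forall x y : L, covers x y -> rho y = (rho x).+1.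

Lemma rho_lt x y : x < y -> (rho x < rho y)%N.
Proof.
suff: forall n x, (#|[set t : L | ((x < t) && (t <= y))%O]| < n)%N -> x < y -> (rho x < rho y)%N.
  by move=> H; apply: (H _ x (ltnSn _)).
elim=> [|n IH] {}x //.
move=> cx xy; case: (@exists_cover x y xy) => z /andP [cz zy].
move: zy; rewrite le_eqVlt => /orP [/eqP <- | zy]; first by rewrite (rS _ _ cz).
apply: (@leq_trans (rho z)); first by rewrite (rS _ _ cz).
apply: ltnW; apply: IH (zy).
rewrite -ltnS; apply: leq_trans cx; rewrite ltnS.
apply: proper_card; apply/properP; split.
  apply/subsetP => s; rewrite !inE => /andP [zs ->]; rewrite andbT.
  by apply: lt_trans zs; case/andP: cz.
by exists z; rewrite !inE ?ltxx // (ltW zy) andbT; case/andP: cz.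
Qed.

Lemma rho_cover x y : x < y -> rho y = (rho x).+1 -> covers x y.
Proof.
move=> xy Hy; rewrite /covers xy /=; apply/forallP => t; apply/negP => /andP [h1 h2].
have := rho_lt _ _ h1; have := rho_lt _ _ h2; rewrite Hy ltnS => h3 h4.
by have := leq_trans h4 h3; rewrite ltnn.
Qed.

Hypothesis r0 : rho \bot = 0%N.
Hypothesis modH : forall x y : L, (rho (x `|` y) + rho (x `&` y) <= rho x + rho y)%N.

Lemma atom_cover x a : atom a -> ~~ (a <= x) -> covers x (x `|` a).
Proof.
move=> aa nax.
have ra : rho a = 1%N by rewrite (rS _ _ aa) r0.
have m0 : x `&` a = \bot.
  case/andP: aa => _ /forallP Ha.
  have : x `&` a <= a by rewrite leIr.
  rewrite le_eqVlt => /orP [/eqP E | lt].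
    by move: nax; rewrite -E leIl.
  have : \bot <= x `&` a by rewrite le0x.
  rewrite le_eqVlt => /orP [/eqP E // | lt0].
  by have := Ha (x `&` a); rewrite lt0 lt.
have xxa : x < x `|` a.
  rewrite lt_neqAle leUl andbT; apply/negP => /eqP E; move: nax.
  by rewrite E leUr.
apply: rho_cover => //.
have := modH x a; rewrite m0 r0 ra addn0 addn1 => h.
have := rho_lt _ _ xxa => h2; apply/eqP; rewrite eqn_leq h h2 //.
Qed.

End H.
Arguments covers_join {d L x u a}.
Arguments atom_cover {d L rho} rS r0 modH {x a}.
Arguments rho_cover {d L rho} rS {x y}.

Lemma nth_swap_adj (T : Type) (x0 : T) i s j : (i.+1 < size s)%N ->
  nth x0 (swap_adj i s) j =
  if j == i then nth x0 s i.+1 else if j == i.+1 then nth x0 s i else nth x0 s j.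
Proof.
move=> h; rewrite /swap_adj (drop_nth x0 (ltnW h)) (drop_nth x0 h).
have si : size (take i s) = i by rewrite size_take (ltnW h).
rewrite nth_cat si.
case: (ltngtP j i) => [ji|ij|->]; last by rewrite subnn.
- by rewrite nth_take // (ltn_eqF (ltn_trans ji (ltnSn _))).
- move: ij; rewrite leq_eqVlt => /orP [/eqP <-|ij].
    by rewrite subSnn eqxx.
  rewrite (gtn_eqF ij) -(subnKC ij).
  have -> : (i.+2 + (j - i.+2) - i = (j - i.+2).+2)%N by lia.
  by rewrite /= nth_drop.
Qed.

Lemma size_swap_adj (T : Type) i (s : seq T) : size (swap_adj i s) = size s.
Proof.
rewrite /swap_adj; case E: (drop i s) => [|a [|b t]] //.
by rewrite -{2}(cat_take_drop i s) E !size_cat.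
Qed.

Unset Implicit Arguments.

Theorem lemma4p3 (d : Order.disp_t) (L : finTBLatticeType d)
    (rho : L -> nat) (r : nat) (w : L -> nat) (b : seq L) (i : nat) :
  geometric rho -> rho \top = r.+1 ->
  {in [pred a : L | atom a] &, injective w} ->
  is_min_labeling w b ->
  (i.+1 < size b)%N ->
  (w (nth \bot b i) < w (nth \bot b i.+1))%N ->
  is_min_labeling w (swap_adj i b).
Proof.
move=> [[r0 rS] _ modH] _ _ [c [/andP [pc lc] [sz lab]]] ilt wlt.
rewrite sz in ilt.
have ilt' : (i < size c)%N by apply: ltn_trans ilt.
set x := nth \bot (\bot :: c) i.
set u := nth \bot c i.
set z := nth \bot c i.+1.
set p := nth \bot b i.
set q := nth \bot b i.+1.
have [pa xpu mp] : min_label w x u p := lab i ilt'.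
have [qa uqz mq] : min_label w u z q := lab i.+1 ilt.
have cxu : covers x u := (pathP \bot pc) i ilt'.
have cuz : covers u z := (pathP \bot pc) i.+1 ilt.
have xu : x <= u by apply: ltW; case/andP: cxu.
have uz : u < z by case/andP: cuz.
have nqu : ~~ (q <= u).
  apply/negP => qu; move: uz; rewrite -uqz (join_l qu) ltxx //.
have nqx : ~~ (q <= x) by apply/negP => qx; move/negP: nqu; apply; exact: le_trans qx xu.
set y := x `|` q.
have cxy : covers x y := atom_cover rS r0 modH qa nqx.
have qz : q <= z by rewrite -uqz leUr.
have yz : y <= z by rewrite leUx qz (le_trans xu (ltW uz)).
have ry : rho y = (rho x).+1 := rS _ _ cxy.
have rz : rho z = (rho x).+2 by rewrite (rS _ _ cuz) (rS _ _ cxu).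
have yz' : y < z.
  rewrite lt_neqAle yz andbT; apply/negP => /eqP E; move: rz; rewrite -E ry.
  by move/eqP; rewrite eqSS -[X in X == _]addn0 -addn1 eqn_add2l.
have cyz : covers y z by apply: (rho_cover rS yz'); rewrite rz ry.
have nyu : y != u by apply/negP => /eqP E; move: nqu; rewrite -E leUr.
have ypz : y `|` p = z by rewrite /y joinAC xpu uqz.
have ml1 : min_label w x y q.
  split => // a aa xay; rewrite leqNgt; apply/negP => waq.
  case: (boolP (a <= u)) => au.
    have : x `|` a <= u by rewrite leUx xu au.
    rewrite xay => yu.
    have yu' : y < u by rewrite lt_neqAle nyu yu.
    case/andP: cxu => _ /forallP /(_ y); rewrite yu' andbT.
    by case/andP: cxy => ->.
  have az : a <= z by apply: le_trans yz; rewrite -xay leUr.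
  by have := mq a aa (covers_join cuz az au); rewrite leqNgt waq.
have ml2 : min_label w y z p.
  split => // a aa yaz; rewrite leqNgt; apply/negP => wap.
  have az : a <= z by rewrite -yaz leUr.
  case: (boolP (a <= u)) => au.
    case: (boolP (a <= x)) => ax.
      move: yz'; rewrite -yaz join_l ?ltxx //.
      by apply: le_trans ax _; rewrite leUl.
    by have := mp a aa (covers_join cxu au ax); rewrite leqNgt wap.
  have := mq a aa (covers_join cuz az au) => h.
  by move: (leq_ltn_trans h wap); rewrite ltnNge ltnW.
pose c' := set_nth \bot c i y.
have szc' : size c' = size c by rewrite size_set_nth; apply/maxn_idPr.
have E0 : forall j, j != i -> nth \bot c' j = nth \bot c j.
  by move=> j ji; rewrite nth_set_nth /= (negbTE ji).
have E1 : forall j, j != i.+1 -> nth \bot (\bot :: c') j = nth \bot (\bot :: c) j.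
  by case=> //= j ji; rewrite E0.
have Ei : nth \bot c' i = y by rewrite nth_set_nth /= eqxx.
have Ei1 : nth \bot (\bot :: c') i.+1 = y by [].
have Ei' : nth \bot (\bot :: c') i = x by rewrite E1 // neq_ltn ltnSn.
have Ei1' : nth \bot c' i.+1 = z by rewrite E0 // gtn_eqF.
exists c'; split; [apply/andP; split | split].
- apply/(pathP \bot) => j; rewrite szc' => jc.
  case: (eqVneq j i) => [->|ji]; first by rewrite Ei Ei'.
  case: (eqVneq j i.+1) => [->|ji1]; first by rewrite Ei1 Ei1'.
  by rewrite E0 // E1 //; apply: (pathP \bot pc).
- rewrite (last_nth \bot) szc' E1 -?(last_nth \bot) //.
  by rewrite eq_sym (ltn_eqF ilt).
- by rewrite size_swap_adj szc' sz.
- move=> j; rewrite szc' => jc; rewrite nth_swap_adj ?sz //.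
  case: (eqVneq j i) => [->|ji]; first by rewrite Ei Ei'.
  case: (eqVneq j i.+1) => [->|ji1]; first by rewrite Ei1 Ei1'.
  by rewrite E0 // E1 //; apply: lab.
Qed.
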